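(* Let $m,n\ge 3$ and let $H$ be a $1$-clique sum of the cycles $C_m$ and $C_n$, i.e. the graph obtained from disjoint copies of $C_m$ and $C_n$ by identifying one vertex of $C_m$ with one vertex of $C_n$. Then $v(H)=v(C_n)+v(C_m)-1$.
   Context: For a proper graded ideal $I$ of a standard graded polynomial ring $S$ over a field, the $v$-number is $v(I)=\min\{k\ge 0 : \exists f\in S_k,\ \mathcal P\in\operatorname{Ass}(S/I) \text{ with } (I:f)=\mathcal P\}$. For a finite simple graph $G$, $I(G)$ is the edge ideal generated by $x_ix_j$ over edges $\{x_i,x_j\}$, and $v(G):=v(I(G))$. $C_k$ denotes the cycle on $k$ vertices. *)

(* Defs.v *)
From HB Require Import structures.
From mathcomp Require Import all_boot all_order all_algebra.
From mathcomp Require Import mpoly.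
From Stdlib Require Import ClassicalDescription.
Set Implicit Arguments. Unset Strict Implicit. Unset Printing Implicit Defensive.
Import GRing.Theory.
Local Open Scope ring_scope.
Delimit Scope nat_scope with N.

Section VNumber.
Variables (K : fieldType) (N : nat).
Local Notation S := {mpoly K[N]}.

Definition polyset := S -> Prop.

Definition is_ideal (I : polyset) : Prop :=
  I 0 /\ (forall f g, I f -> I g -> I (f + g)) /\ (forall f g, I g -> I (f * g)).

Definition is_prime_ideal (P : polyset) : Prop :=
  is_ideal P /\ ~ P 1 /\ (forall f g, P (f * g) -> P f \/ P g).

Definition colon (I : polyset) (f : S) : polyset := fun g => I (g * f).

Definition same_set (A B : polyset) : Prop := forall g, A g <-> B g.

Definition Ass (I : polyset) (P : polyset) : Prop :=
  is_prime_ideal P /\ exists g : S, same_set (colon I g) P.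

(* S_k : homogeneous polynomials of degree k (standard grading), 0 included *)
Definition homogeneous (k : nat) (f : S) : Prop :=
  forall m, m \in msupp f -> mdeg m = k.

Definition has_vnum (I : polyset) (k : nat) : Prop :=
  exists (f : S) (P : polyset), homogeneous k f /\ Ass I P /\ same_set (colon I f) P.

Definition has_vnumb (I : polyset) : pred nat :=
  fun k => if excluded_middle_informative (has_vnum I k) then true else false.

(* v(I) = least k with has_vnum I k (0 by convention if none exists;
   for proper graded ideals such a k always exists) *)
Definition vnumber (I : polyset) : nat :=
  match excluded_middle_informative (exists k, has_vnumb I k) with
  | left H => ex_minn H
  | right _ => 0%N
  end.

Definition edge_ideal (e : rel 'I_N) : polyset :=
  fun p => exists c : 'I_N -> 'I_N -> S,
    p = \sum_(i < N) \sum_(j < N | e i j) c i j * ('X_i * 'X_j).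

End VNumber.

Definition cycle_rel (n : nat) : rel 'I_n :=
  fun i j => ((val j == (val i).+1 %% n) || (val i == (val j).+1 %% n))%N.
Arguments cycle_rel n : clear implicits.
Arguments edge_ideal K {N} e _.

(* Main.v *)
Require Import Defs.
From HB Require Import structures.
From mathcomp Require Import all_boot all_order all_algebra.
From mathcomp Require Import mpoly.
From Stdlib Require Import ClassicalDescription.
Set Implicit Arguments. Unset Strict Implicit. Unset Printing Implicit Defensive.
Import GRing.Theory.
From mathcomp Require Import zify.


Section Comb.
Variables (V : finType) (e : rel V).
Implicit Types (A B C : {set V}).
Definition adj x y := e x y || e y x.
Definition nbh (A : {set V}) := [set y | [exists x in A, adj x y]].
Definition indep (A : {set V}) := [forall x in A, forall y in A, ~~ e x y].
Definition cover (C : {set V}) := [forall x, forall y, e x y ==> (x \in C) || (y \in C)].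
Definition valid (A : {set V}) := indep A && cover (nbh A).
Definition vP k := [exists A : {set V}, valid A && (#|A| == k)].
Definition vc : nat :=
  match excluded_middle_informative (exists k, vP k) with
  | left H => ex_minn H
  | right _ => 0%N
  end.

Lemma vcP : (exists A, valid A) -> exists A, valid A /\ #|A| = vc.
Proof.
case=> A vA; rewrite /vc; case: excluded_middle_informative => [H|[]]; last first.
  by exists #|A|; apply/existsP; exists A; rewrite vA eqxx.
case: ex_minnP => k /existsP [B /andP [vB /eqP cB]] _; by exists B.
Qed.

Lemma vc_min A : valid A -> (vc <= #|A|)%N.
Proof.
move=> vA; rewrite /vc; case: excluded_middle_informative => [H|[]]; last first.
  by exists #|A|; apply/existsP; exists A; rewrite vA eqxx.
case: ex_minnP => k _ hk; apply: hk; apply/existsP; exists A; by rewrite vA eqxx.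
Qed.

Lemma indepP A : reflect (forall x y, x \in A -> y \in A -> ~~ e x y) (indep A).
Proof.
apply: (iffP forall_inP) => [h x y xA yA|h x xA]; first exact: (forall_inP (h x xA)).
by apply/forall_inP => y yA; apply: h.
Qed.

Lemma coverP C : reflect (forall x y, e x y -> (x \in C) \/ (y \in C)) (cover C).
Proof.
apply: (iffP forallP) => [h x y exy|h x].
  by move/forallP: (h x) => /(_ y); rewrite exy /= => /orP.
by apply/forallP => y; apply/implyP => /h /orP.
Qed.

Lemma nbhP A y : reflect (exists2 x, x \in A & adj x y) (y \in nbh A).
Proof. rewrite inE; exact: exists_inP. Qed.

Lemma valid_exists : (forall x, ~~ e x x) -> exists A, valid A.
Proof.
move=> irr.
have [A iA maxA] : exists2 A, indep A & forall B, indep B -> (#|B| <= #|A|)%N.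
  have i0 : indep set0 by apply/indepP => x y; rewrite inE.
  case: (@arg_maxnP {set V} set0 indep (fun B => #|B|) i0) => A iA h.
  by exists A.
have key : forall x, x \notin A -> x \in nbh A.
  move=> x xA; apply/negPn/negP => /negP xN.
  have : indep (x |: A).
    apply/indepP => u v; rewrite !inE => /orP [/eqP->|uA] /orP [/eqP->|vA].
    - exact: irr.
    - apply/negP => exv; apply: xN; apply/nbhP; exists v => //; by rewrite /adj exv orbT.
    - apply/negP => eux; apply: xN; apply/nbhP; exists u => //; by rewrite /adj eux.
    - exact: (indepP _ iA).
  move/maxA; by rewrite cardsU1 xA ltnn.
exists A; rewrite /valid iA; apply/coverP => x y exy.
case: (boolP (x \in A)) => xA; last by left; apply: key.
case: (boolP (y \in A)) => yA; last by right; apply: key.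
by move: (indepP _ iA x y xA yA); rewrite exy.
Qed.

End Comb.

Section Alg.
Variables (K : fieldType) (N : nat) (e : rel 'I_N).
Hypothesis eirr : forall x, ~~ e x x.
Local Notation S := {mpoly K[N]}.
Local Notation I := (edge_ideal K e).
Local Open Scope ring_scope.

Definition divE (m : 'X_{1..N}) :=
  [exists i, exists j, e i j && (U_(i) + U_(j) <= m)%MM].

Lemma divE_addl m m' : divE m -> divE (m' + m)%MM.
Proof.
case/existsP=> i /existsP [j /andP [eij le]].
apply/existsP; exists i; apply/existsP; exists j; rewrite eij /=.
exact: lepm_trans le (lem_addl _ _).
Qed.

Lemma I0 : I 0.
Proof.
exists (fun _ _ => 0); rewrite big1 // => i _; rewrite big1 // => j _; exact: mul0r.
Qed.

Lemma ID p q : I p -> I q -> I (p + q).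
Proof.
case=> c1 -> [c2 ->]; exists (fun i j => c1 i j + c2 i j).
rewrite -big_split /=; apply: eq_bigr => i _.
rewrite -big_split /=; apply: eq_bigr => j _; by rewrite mulrDl.
Qed.

Lemma IM f p : I p -> I (f * p).
Proof.
case=> c ->; exists (fun i j => f * c i j).
rewrite mulr_sumr; apply: eq_bigr => i _.
rewrite mulr_sumr; apply: eq_bigr => j _; by rewrite mulrA.
Qed.

Lemma Igen q i j : e i j -> I (q * ('X_i * 'X_j)).
Proof.
move=> eij; exists (fun i' j' => if (i' == i) && (j' == j) then q else 0).
rewrite (bigD1 i) //= (bigD1 j) //= !eqxx /=.
rewrite big1 ?addr0; last by move=> j' /andP [_ /negbTE ->]; rewrite mul0r.
rewrite big1 ?addr0 //; move=> i' /negbTE ne; rewrite big1 // => j' _.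
by rewrite ne mul0r.
Qed.

Lemma Isum (T : Type) (r : seq T) (P : pred T) (F : T -> S) :
  (forall x, P x -> I (F x)) -> I (\sum_(x <- r | P x) F x).
Proof. move=> h; apply: big_ind => //; [exact: I0 | exact: ID]. Qed.

Lemma msupp_MX (p : S) u m : m \in msupp (p * 'X_[u]) ->
  exists2 m', m' \in msupp p & m = (u + m')%MM.
Proof.
by rewrite (perm_mem (msuppMX p u)) => /mapP [m' h ->]; exists m'.
Qed.

Lemma msupp_MX' (p : S) u m' : m' \in msupp p -> (u + m')%MM \in msupp (p * 'X_[u]).
Proof.
by move=> h; rewrite (perm_mem (msuppMX p u)); apply/mapP; exists m'.
Qed.

Lemma memI_divE p : I p -> forall m, m \in msupp p -> divE m.
Proof.
case=> c ->.
pose Q (p : S) := forall m, m \in msupp p -> divE m.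
have Q0 : Q 0 by move=> m; rewrite mcoeff_msupp mcoeff0 eqxx.
have QD : forall p q, Q p -> Q q -> Q (p + q).
  move=> p1 q1 h1 h2 m /msuppD_le; rewrite mem_cat => /orP [] ?; [exact: h1|exact: h2].
apply: (big_ind Q) => // i _; apply: (big_ind Q) => // j eij.
rewrite -mpolyXD => m /msupp_MX [m' _ ->].
apply/existsP; exists i; apply/existsP; exists j; rewrite eij; exact: lem_addr.
Qed.

Lemma divE_memI p : (forall m, m \in msupp p -> divE m) -> I p.
Proof.
move=> h; rewrite [p]mpolyE big_seq; apply: Isum => m /h.
case/existsP=> i /existsP [j /andP [eij le]].
have -> : 'X_[m] = 'X_[m - (U_(i) + U_(j))] * ('X_i * 'X_j) :> S.
  by rewrite -!mpolyXD submK.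
rewrite scalerAl; exact: Igen.
Qed.


Definition hits (C : {set 'I_N}) (m : 'X_{1..N}) := [exists i in C, m i != 0%N].
Definition PC (C : {set 'I_N}) : polyset K N := fun g => forall m, m \in msupp g -> hits C m.
Definition lq (C : {set 'I_N}) : N.-tuple S := [tuple (if i \in C then 0 else 'X_i) | i < N].

Lemma phiX C m : 'X_[m] \mPo lq C = if hits C m then 0 else 'X_[m].
Proof.
rewrite comp_mpolyX; case: ifP => [/exists_inP [i iC mi]|hn].
  rewrite (bigD1 i) //= tnth_mktuple iC expr0n (negbTE mi) mul0r //.
rewrite [RHS]mpolyXE_id; apply: eq_bigr => i _; rewrite tnth_mktuple.
case: ifP => // iC; have -> : m i = 0%N.
  by apply/eqP; apply/negPn/negP => mi; move/negbT/negP: hn; apply; rewrite /hits; apply/exists_inP; exists i.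
by rewrite !expr0.
Qed.

Lemma phiE C p : p \mPo lq C = \sum_(m <- msupp p | ~~ hits C m) p@_m *: 'X_[m].
Proof.
rewrite comp_mpolyEX [RHS]big_mkcond /=; apply: eq_bigr => m _.
rewrite phiX; case: hits => //=; by rewrite scaler0.
Qed.

Lemma PC_phi C p : PC C p <-> p \mPo lq C = 0.
Proof.
rewrite phiE; split.
  move=> h; rewrite big_seq_cond big1 // => m0 /andP [Hm0 Hh].
  by have := h m0 Hm0; move: Hh; rewrite /hits => /negbTE ->.
move=> h0 m Hmp; case: (boolP (hits C m)) => // hm.
have : m \in msupp (\sum_(m <- msupp p | ~~ hits C m) p@_m *: 'X_[m]).
  rewrite -big_filter (perm_mem (msupp_sumX _ _)).
  - by rewrite mem_filter hm.
  - exact/filter_uniq/msupp_uniq.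
  - by move=> m'; rewrite mem_filter => /andP [_]; rewrite mcoeff_msupp.
by rewrite h0 mcoeff_msupp mcoeff0 eqxx.
Qed.

Lemma phiM C (f g : S) : (f * g) \mPo lq C = (f \mPo lq C) * (g \mPo lq C).
Proof. by rewrite GRing.rmorphM. Qed.

Lemma PC_prime C : is_prime_ideal (PC C).
Proof.
split; [split; [|split] | split].
- by apply/PC_phi; rewrite comp_mpoly0.
- by move=> f g /PC_phi hf /PC_phi hg; apply/PC_phi; rewrite comp_mpolyD hf hg addr0.
- by move=> f g /PC_phi hg; apply/PC_phi; rewrite phiM hg mulr0.
- by move/PC_phi; rewrite comp_mpoly1; apply/eqP; exact: oner_neq0.
- move=> f g /PC_phi; rewrite phiM => /eqP; rewrite mulf_eq0 => /orP [] /eqP h.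
  + by left; apply/PC_phi.
  + by right; apply/PC_phi.
Qed.


Definition mA (A : {set 'I_N}) : 'X_{1..N} := [multinom (i \in A : nat) | i < N].

Lemma mAE A i : mA A i = (i \in A).
Proof. by rewrite /mA mnmE. Qed.

Lemma divE_mA A m' : valid e A -> divE (mA A + m') = hits (nbh e A) m'.
Proof.
move=> /andP [/indepP iA /coverP cA].
apply/idP/idP.
  case/existsP=> i /existsP [j /andP [eij /mnm_lepP le]].
  have nij : i != j by apply/negP => /eqP eq; move: (eirr i); rewrite {2}eq eij.
  have key : forall k, (1 <= (k \in A) + m' k)%N -> k \in nbh e A -> hits (nbh e A) m'.
    move=> k hk kN; case: (boolP (m' k == 0%N)) => [/eqP m0|mk]; last first.
      by apply/exists_inP; exists k.
    move: hk; rewrite m0 addn0; case: (boolP (k \in A)) => // kA _.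
    case/nbhP: kN => x xA; rewrite /adj => /orP [] exk.
    - by move: (iA x k xA kA); rewrite exk.
    - by move: (iA k x kA xA); rewrite exk.
  case: (cA i j eij) => [iN|jN].
  - apply: (key i) => //; move: (le i); rewrite !mnmDE !mnm1E mAE eqxx; exact: leq_trans (leq_addr _ _).
  - apply: (key j) => //; move: (le j); rewrite !mnmDE !mnm1E mAE eqxx; exact: leq_trans (leq_addl _ _).
case/exists_inP=> i /nbhP [x xA axi] mi.
have nxi : x != i.
  by apply/negP => /eqP eq; move: axi; rewrite eq /adj (negbTE (eirr i)).
have hx : forall k, (((x == k) + (i == k)) <= (mA A + m')%MM k)%N.
  move=> k; rewrite mnmDE mAE.
  case: (eqVneq x k) => [<-|xk]; first by rewrite xA eq_sym (negbTE nxi).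
  case: (eqVneq i k) => [<-|ik] //.
  by rewrite /= add0n; apply: leq_trans (leq_addl _ _); rewrite lt0n.
move: axi; rewrite /adj => /orP [] exi; apply/existsP.
- exists x; apply/existsP; exists i; rewrite exi /=; apply/mnm_lepP => k.
  by rewrite mnmDE !mnm1E.
- exists i; apply/existsP; exists x; rewrite exi /=; apply/mnm_lepP => k.
  by rewrite mnmDE !mnm1E addnC.
Qed.

Lemma colon_mA A : valid e A -> same_set (colon I 'X_[mA A]) (PC (nbh e A)).
Proof.
move=> vA g; rewrite /colon; split.
  by move=> h m Hm; rewrite -divE_mA //; apply: (memI_divE h); exact: msupp_MX'.
move=> h; apply: divE_memI => m /msupp_MX [m' Hm' ->]; rewrite divE_mA //; exact: h.
Qed.

Lemma homog_mA (A : {set 'I_N}) : homogeneous #|A| ('X_[mA A] : S).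
Proof.
move=> m /mem_msuppXP <-; rewrite mdegE -sum1_card [RHS]big_mkcond /=.
by apply: eq_bigr => i _; rewrite mAE; case: (i \in A).
Qed.

Lemma lower f k P : homogeneous k f -> is_prime_ideal P -> same_set (colon I f) P ->
  exists A, valid e A /\ (#|A| <= k)%N.
Proof.
move=> hf [[P0 [PD PM]] [P1 Pp]] hs.
have nIf : ~ I f by move=> If; apply: P1; apply/hs; rewrite /colon mul1r.
have [m Hm ndiv] : exists2 m, m \in msupp f & ~~ divE m.
  case: (boolP (all divE (msupp f))) => [/allP h|]; first by exfalso; apply: nIf; apply: divE_memI.
  by rewrite -has_predC => /hasP [m Hm nd]; exists m.
pose A := [set i | m i != 0%N].
have PX : forall i, P 'X_i -> i \in nbh e A.
  move=> i /hs; rewrite /colon mulrC => /memI_divE /(_ _ (msupp_MX' _ Hm)).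
  case/existsP=> u /existsP [v /andP [euv /mnm_lepP le]].
  have nuv : u != v by apply/negP => /eqP eq; move: (eirr u); rewrite {2}eq euv.
  case: (eqVneq u i) => [ui|ui]; last case: (eqVneq v i) => [vi|vi].
  - subst u; apply/nbhP; exists v; last by rewrite /adj euv orbT.
    rewrite inE -lt0n; move: (le v); rewrite !mnmDE !mnm1E eqxx (negbTE nuv) //.
  - subst v; apply/nbhP; exists u; last by rewrite /adj euv.
    rewrite inE -lt0n; move: (le u); rewrite !mnmDE !mnm1E eqxx eq_sym (negbTE nuv) addn0 //.
  - exfalso; move/negP: ndiv; apply; apply/existsP; exists u; apply/existsP; exists v.
    rewrite euv /=; apply/mnm_lepP => t; move: (le t); rewrite !mnmDE !mnm1E.
    case: (eqVneq t i) => [->|ik] //.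
    by rewrite (negbTE ui) (negbTE vi).
exists A; split.
  rewrite /valid; apply/andP; split.
    apply/indepP => x y; rewrite !inE => mx my; apply/negP => exy.
    have nxy : x != y by apply/negP => /eqP eq; move: (eirr x); rewrite {2}eq exy.
    move/negP: ndiv; apply; apply/existsP; exists x; apply/existsP; exists y.
    rewrite exy /=; apply/mnm_lepP => t; rewrite !mnmDE !mnm1E.
    case: (eqVneq x t) => [<-|xk]; first by rewrite eq_sym (negbTE nxy) addn0 lt0n.
    case: (eqVneq y t) => [<-|yk] //=; by rewrite lt0n.
  apply/coverP => x y exy.
  have : P ('X_x * 'X_y).
    apply/hs; rewrite /colon mulrC; apply: IM; rewrite -[_ * _]mul1r; exact: Igen.
  by case/Pp => /PX; [left|right].
rewrite -(hf m Hm) mdegE -sum1_card [X in (X <= _)%N]big_mkcond /=.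
apply: leq_sum => i _; rewrite inE; by case: (m i).
Qed.

Lemma hv_lower k : has_vnum I k -> exists A, valid e A /\ (#|A| <= k)%N.
Proof. case=> f [P [hf [[Pp _] hs]]]; exact: lower hf Pp hs. Qed.

Lemma hv_upper (A : {set 'I_N}) : valid e A -> has_vnum I #|A|.
Proof.
move=> vA; exists 'X_[mA A], (PC (nbh e A)); split; first exact: homog_mA.
split; last exact: colon_mA.
split; first exact: PC_prime.
by exists 'X_[mA A]; apply: colon_mA.
Qed.

Lemma vnumber_vc : vnumber I = vc e.
Proof.
have [A0 vA0] := valid_exists eirr.
have hb : forall k, has_vnumb I k = true <-> has_vnum I k.
  by move=> k; rewrite /has_vnumb; case: excluded_middle_informative.
rewrite /vnumber; case: excluded_middle_informative => [H|[]]; last first.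
  by exists #|A0|; apply/hb/hv_upper.
case: ex_minnP => k /hb hk kmin.
apply/eqP; rewrite eqn_leq; apply/andP; split.
- have [A [vA cA]] := vcP (ex_intro _ A0 vA0).
  rewrite -cA; apply: kmin; apply/hb; exact: hv_upper vA.
- have [A [vA le]] := hv_lower hk; exact: leq_trans (vc_min vA) le.
Qed.

End Alg.

Lemma valid_iso (V : finType) (e : rel V) (f : V -> V) (A : {set V}) :
  injective f -> (forall x y, e (f x) (f y) = e x y) -> valid e A -> valid e (f @: A).
Proof.
move=> finj fe /andP [/indepP iA /coverP cA]; apply/andP; split.
  apply/indepP => _ _ /imsetP [x xA ->] /imsetP [y yA ->]; rewrite fe; exact: iA.
have [g fg gf] := injF_bij finj.
apply/coverP => x y; rewrite -(gf x) -(gf y) fe => /cA [] /nbhP [z zA hz]; [left|right];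
  by apply/nbhP; exists (f z); rewrite ?mem_imset // /adj !fe.
Qed.

Lemma modS_neq n i : (2 <= n)%N -> (i < n)%N -> (i == (i.+1) %% n) = false.
Proof. move=> h1 h2; case: (ltngtP i.+1 n) => h3.
- by rewrite modn_small // eqn_leq ltnn andbF.
- lia.
- rewrite -h3 modnn; lia. Qed.

Lemma cyc_irr n (hn : (2 <= n)%N) (i : 'I_n) : ~~ cycle_rel n i i.
Proof. by rewrite /cycle_rel modS_neq // ltn_ord. Qed.

Section Rot.
Variables (m : nat) (m0 : (0 < m)%N).
Definition rot (s : nat) (i : 'I_m) : 'I_m := Ordinal (ltn_pmod (i + s) m0).

Lemma rot_cyc s i j : cycle_rel m (rot s i) (rot s j) = cycle_rel m i j.
Proof.
rewrite /cycle_rel /=.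
have H : forall x y : 'I_m, ((y + s) %% m == ((x + s) %% m).+1 %% m) = (val y == (val x).+1 %% m).
  move=> x y; rewrite -addn1 modnDml addn1 -addSn eqn_modDr.
  by rewrite (modn_small (ltn_ord y)).
by rewrite !H.
Qed.

Lemma rot_inj s : injective (rot s).
Proof.
move=> x y /(congr1 val) /= /eqP; rewrite eqn_modDr !modn_small // => /eqP; exact: val_inj.
Qed.

Lemma rot_exists (A : {set 'I_m}) k i0 : valid (cycle_rel m) A -> k \in A ->
  exists A', [/\ valid (cycle_rel m) A', #|A'| = #|A| & i0 \in A'].
Proof.
move=> vA kA; exists (rot (i0 + (m - k)) @: A); split.
- exact: valid_iso (@rot_inj _) (@rot_cyc _) vA.
- exact: card_imset (@rot_inj _).
- apply/imsetP; exists k => //; apply: val_inj => /=.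
  by rewrite addnCA subnKC ?(ltnW (ltn_ord k)) // modnDr modn_small.
Qed.
End Rot.

Definition tside m N (a : 'I_m -> 'I_N) i0 (A : {set 'I_N}) :=
  [exists k, (a k \in A) && adj (cycle_rel m) k i0].
Definition Bside m N (a : 'I_m -> 'I_N) (i0 : 'I_m) (A : {set 'I_N}) (ex : bool) :=
  if ex then i0 |: [set i | a i \in A] else [set i | a i \in A].

Section Side.
Variables (m n N : nat) (hm : (3 <= m)%N) (hn : (3 <= n)%N) (e : rel 'I_N)
  (a : 'I_m -> 'I_N) (b : 'I_n -> 'I_N) (i0 : 'I_m) (j0 : 'I_n).
Hypotheses (a_inj : injective a) (b_inj : injective b)
    (hab : forall i j, a i = b j <-> (i = i0 /\ j = j0))
    (hcov : forall x, (exists i, x = a i) \/ (exists j, x = b j))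
    (he : forall x y, e x y <->
       ((exists i j, x = a i /\ y = a j /\ cycle_rel m i j) \/
        (exists i j, x = b i /\ y = b j /\ cycle_rel n i j))).

Let hm2 : (2 <= m)%N. Proof. exact: ltnW. Qed.
Let hn2 : (2 <= n)%N. Proof. exact: ltnW. Qed.

Lemma eaa i j : e (a i) (a j) = cycle_rel m i j.
Proof.
apply/idP/idP => [/he [[i' [j' [/a_inj -> [/a_inj -> //]]]] | [i' [j' [h1 [h2 c]]]]] | c].
  move: h1 h2 c => /hab [_ ->] /hab [_ ->]; by rewrite (negbTE (cyc_irr hn2 _)).
by apply/he; left; exists i, j.
Qed.

Lemma ebb i j : e (b i) (b j) = cycle_rel n i j.
Proof.
apply/idP/idP => [/he [[i' [j' [h1 [h2 c]]]] | [i' [j' [/b_inj -> [/b_inj -> //]]]]] | c].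
  move: h1 h2 c => /esym /hab [-> _] /esym /hab [-> _]; by rewrite (negbTE (cyc_irr hm2 _)).
by apply/he; right; exists i, j.
Qed.

Lemma eab i j : e (a i) (b j) -> (i = i0 /\ cycle_rel n j0 j) \/ (j = j0 /\ cycle_rel m i i0).
Proof.
case/he => [[i' [j' [/a_inj -> [/esym /hab [-> ->] c]]]] | [i' [j' [/hab [-> ->] [/b_inj -> c]]]]].
- by right.
- by left.
Qed.

Lemma eba j i : e (b j) (a i) -> (i = i0 /\ cycle_rel n j j0) \/ (j = j0 /\ cycle_rel m i0 i).
Proof.
case/he => [[i' [j' [/esym /hab [-> ->] [/a_inj -> c]]]] | [i' [j' [/b_inj -> [/hab [-> ->] c]]]]].
- by right.
- by left.
Qed.

Lemma side_cover w z : adj e z (a w) ->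
  (exists2 k, z = a k & adj (cycle_rel m) k w) \/
  (w = i0 /\ exists2 l, z = b l & adj (cycle_rel n) l j0).
Proof.
have ba : b j0 = a i0 by apply/esym/hab.
case: (hcov z) => [[k ->]|[l ->]].
  by rewrite /adj !eaa => h; left; exists k.
rewrite /adj => /orP [/eba [[-> c]|[-> c]] | /eab [[-> c]|[-> c]]].
- by right; split => //; exists l => //; rewrite c.
- by left; exists i0 => //; rewrite c.
- by right; split => //; exists l => //; rewrite c orbT.
- by left; exists i0 => //; rewrite c orbT.
Qed.

Lemma Bside_valid A : valid e A ->
  valid (cycle_rel m) (Bside a i0 A (tside b j0 A && ~~ tside a i0 A)).
Proof.
move=> vA; move: (vA) => /andP [/indepP iA /coverP cA].
set tn := tside b j0 A; set tm := tside a i0 A.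
have memB : forall i, (i \in Bside a i0 A (tn && ~~ tm)) =
    (a i \in A) || ((tn && ~~ tm) && (i == i0)).
  move=> i; rewrite /Bside; case: (tn && ~~ tm); rewrite ?inE ?orbF //= orbC //.
have tmI : forall k, a k \in A -> adj (cycle_rel m) k i0 -> tm.
  by move=> k akA hk; apply/existsP; exists k; rewrite akA.
rewrite /valid; apply/andP; split.
  apply/indepP => x y; rewrite !memB => hx hy; apply/negP => cxy.
  case/orP: hx => [ax|/andP [/andP [_ ntm] /eqP xi]]; case/orP: hy => [ay|/andP [/andP [_ ntm2] /eqP yi]].
  - by move: (iA _ _ ax ay); rewrite eaa cxy.
  - by subst y; move/negP: ntm2; apply; apply: (tmI x) => //; rewrite /adj cxy.
  - by subst x; move/negP: ntm; apply; apply: (tmI y) => //; rewrite /adj cxy orbT.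
  - by subst x y; move: cxy; rewrite (negbTE (cyc_irr hm2 _)).
have key : forall w w', adj (cycle_rel m) w w' -> a w \in nbh e A ->
    (w \in nbh (cycle_rel m) (Bside a i0 A (tn && ~~ tm))) \/
    (w' \in nbh (cycle_rel m) (Bside a i0 A (tn && ~~ tm))).
  move=> w w' ww' /nbhP [z zA hz]; case: (side_cover hz) => [[k zk hk]|[wi [l zl hl]]].
    by left; apply/nbhP; exists k => //; rewrite memB -zk zA.
  subst w z; have htn : tn by apply/existsP; exists l; rewrite zA hl.
  case: (boolP tm) => htm.
    left; move: htm => /existsP [k /andP [akA hk]]; apply/nbhP; exists k => //.
    by rewrite /Bside andbF inE.
  right; apply/nbhP; exists i0 => //; by rewrite htn /Bside setU11.
apply/coverP => u v cuv.
case: (cA (a u) (a v)); first by rewrite eaa.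
- by move=> h; apply: (key u v) => //; rewrite /adj cuv.
- by move=> h; case: (key v u) => //; [rewrite /adj cuv orbT|right|left].
Qed.

Lemma tside_c A : valid e A -> a i0 \in A -> tside a i0 A = false.
Proof.
move=> /andP [/indepP iA _] ai0; apply/negbTE/negP => /existsP [k /andP [akA hk]].
move: hk; rewrite /adj -!eaa => /orP [] h.
- by move: (iA _ _ akA ai0); rewrite h.
- by move: (iA _ _ ai0 akA); rewrite h.
Qed.

Lemma upper Am An : valid (cycle_rel m) Am -> valid (cycle_rel n) An -> i0 \in Am -> j0 \in An ->
  valid e (a @: Am :|: b @: An) /\ #|a @: Am :|: b @: An| = (#|Am| + #|An|).-1.
Proof.
move=> vAm vAn i0A j0A.
move: (vAm) (vAn) => /andP [/indepP iAm /coverP cAm] /andP [/indepP iAn /coverP cAn].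
set U := a @: Am :|: b @: An.
have memUa : forall i, a i \in U -> i \in Am.
  move=> i; rewrite in_setU => /orP [|/imsetP [j jA /hab [-> _]]] //; by rewrite mem_imset.
have memUb : forall j, b j \in U -> j \in An.
  move=> j; rewrite in_setU => /orP [/imsetP [i iA /esym /hab [_ ->]]|] //; by rewrite mem_imset.
have inUa : forall i, i \in Am -> a i \in U.
  by move=> i iA; rewrite /U in_setU (mem_imset _ _ a_inj) iA.
have inUb : forall j, j \in An -> b j \in U.
  by move=> j jA; rewrite /U in_setU (mem_imset _ _ b_inj) jA orbT.
split.
  rewrite /valid; apply/andP; split.
    apply/indepP => x y xU yU; apply/negP => /he [[i [j [xe [ye c]]]]|[i [j [xe [ye c]]]]];
      subst x y.
    - by move: (iAm i j (memUa _ xU) (memUa _ yU)); rewrite c.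
    - by move: (iAn i j (memUb _ xU) (memUb _ yU)); rewrite c.
  apply/coverP => x y /he [[i [j [-> [-> c]]]]|[i [j [-> [-> c]]]]].
  - by case: (cAm i j c) => /nbhP [k kA hk]; [left|right]; apply/nbhP; exists (a k);
      rewrite ?inUa // /adj !eaa.
  - by case: (cAn i j c) => /nbhP [k kA hk]; [left|right]; apply/nbhP; exists (b k);
      rewrite ?inUb // /adj !ebb.
have I1 : a @: Am :&: b @: An = [set a i0].
  apply/setP => x; rewrite in_setI in_set1; apply/andP/eqP.
    by case=> /imsetP [i _ ->] /imsetP [j _ /hab [-> _]].
  move=> ->; split; first by rewrite mem_imset.
  by rewrite (proj2 (hab i0 j0) (conj erefl erefl)) mem_imset.
have := cardsUI (a @: Am) (b @: An); rewrite I1 cards1 !card_imset // => h.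
by rewrite -h addn1.
Qed.

End Side.

Lemma arith (h p q x y : nat) : (h <= p + q - 1 -> p <= x -> q <= y -> x + y <= h + 1 ->
  0 < p -> 0 < q -> h = q + p - 1)%N.
Proof. lia. Qed.

Lemma arith2 (Bm Bn Sa Sb A : nat) (c t1 t2 : bool) : (Bm <= Sa + (t2 && ~~ t1) ->
  Bn <= Sb + (t1 && ~~ t2) -> Sa + Sb <= A + c -> (c -> ~~ t1 && ~~ t2) ->
  (t2 && ~~ t1) + (t1 && ~~ t2) <= 1 -> Bm + Bn <= A + 1)%N.
Proof. by case: c; case: t1; case: t2 => /=; lia. Qed.

Theorem proposition3p9 (K : fieldType) (m n N : nat) (hm : 3 <= m) (hn : 3 <= n)
    (e : rel 'I_N) (a : 'I_m -> 'I_N) (b : 'I_n -> 'I_N) (i0 : 'I_m) (j0 : 'I_n)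
    (a_inj : injective a) (b_inj : injective b)
    (hab : forall i j, a i = b j <-> (i = i0 /\ j = j0))
    (hcov : forall x, (exists i, x = a i) \/ (exists j, x = b j))
    (he : forall x y, e x y <->
       ((exists i j, x = a i /\ y = a j /\ cycle_rel m i j) \/
        (exists i j, x = b i /\ y = b j /\ cycle_rel n i j))) :
  vnumber (edge_ideal K e) =
   (vnumber (edge_ideal K (cycle_rel n)) + vnumber (edge_ideal K (cycle_rel m)) - 1)%N.
Proof.
have hm2 : (2 <= m)%N := ltnW hm.
have hn2 : (2 <= n)%N := ltnW hn.
have hba : forall j i, b j = a i <-> (j = j0 /\ i = i0).
  move=> j i; split => [/esym /hab [-> ->] // | [-> ->]]; exact/esym/hab.
have hcov' : forall x, (exists j, x = b j) \/ (exists i, x = a i).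
  by move=> x; case: (hcov x); [right|left].
have he' : forall x y, e x y <-> ((exists i j, x = b i /\ y = b j /\ cycle_rel n i j) \/
                                 (exists i j, x = a i /\ y = a j /\ cycle_rel m i j)).
  move=> x y; split => [/he [] h | [] h]; [right|left|apply/he; right|apply/he; left]; exact: h.
have eirr : forall x, ~~ e x x.
  move=> x; case: (hcov x) => [[i ->]|[j ->]].
  - rewrite (eaa hn a_inj hab he); exact: cyc_irr hm2 _.
  - rewrite (ebb hm b_inj hab he); exact: cyc_irr hn2 _.
rewrite (vnumber_vc K eirr) (vnumber_vc K (cyc_irr hn2)) (vnumber_vc K (cyc_irr hm2)).
have cyc_ne : forall k (hk : (3 <= k)%N) (A : {set 'I_k}), valid (cycle_rel k) A ->
    exists x, x \in A.
  move=> k hk A /andP [_ /coverP cA].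
  have h0 : (0 < k)%N by apply: leq_trans hk.
  have h1 : (1 < k)%N by apply: leq_trans hk.
  have c01 : cycle_rel k (Ordinal h0) (Ordinal h1) by rewrite /cycle_rel /= modn_small.
  by case: (cA _ _ c01) => /nbhP [z zA _]; exists z.
have [Am0 [vAm0 cAm0]] := vcP (valid_exists (cyc_irr hm2)).
have [k kA] := cyc_ne m hm Am0 vAm0.
have [Am [vAm cAm i0A]] := rot_exists (ltnW (ltnW hm)) i0 vAm0 kA.
have [An0 [vAn0 cAn0]] := vcP (valid_exists (cyc_irr hn2)).
have [l lA] := cyc_ne n hn An0 vAn0.
have [An [vAn cAn j0A]] := rot_exists (ltnW (ltnW hn)) j0 vAn0 lA.
have p1 : (0 < #|Am0|)%N by apply/card_gt0P; exists k.
have q1 : (0 < #|An0|)%N by apply/card_gt0P; exists l.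
have [vU cU] := upper hm hn a_inj b_inj hab he vAm vAn i0A j0A.
have hle := vc_min vU; rewrite cU cAm cAn -subn1 in hle.
have [A [vA cA]] := vcP (valid_exists eirr).
have vBm := Bside_valid hm hn a_inj b_inj hab hcov he vA.
have vBn := Bside_valid hn hm b_inj a_inj hba hcov' he' vA.
have le1 := vc_min vBm; have le2 := vc_min vBn.
have cardB : forall (M : nat) (f : 'I_M -> 'I_N) c ex,
    (#|Bside f c A ex| <= #|[set i | f i \in A]| + ex)%N.
  move=> M f c [] ; rewrite /Bside ?cardsU1 ?addn0 // addnC leq_add2l; exact: leq_b1.
have cardAB : (#|[set i | a i \in A]| + #|[set j | b j \in A]| <= #|A| + (a i0 \in A))%N.
  rewrite -(card_imset _ a_inj) -(card_imset _ b_inj) -cardsUI.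
  apply: leq_add.
    apply: subset_leq_card; apply/subsetP => x; rewrite in_setU.
    by case/orP => /imsetP [y]; rewrite inE => h ->.
  case: (boolP (a i0 \in A)) => ai0.
    apply: (@leq_trans #|[set a i0]|); last by rewrite cards1.
    apply: subset_leq_card; apply/subsetP => x; rewrite in_setI.
    by case/andP => /imsetP [i _ ->] /imsetP [j _ /hab [-> _]]; exact: set11.
  rewrite leqn0 cards_eq0; apply/eqP/setP => x; rewrite in_setI in_set0.
  apply/negP => /andP [/imsetP [i]]; rewrite inE => ai -> /imsetP [j _ /hab [ii _]].
  by subst i; rewrite ai in ai0.
have c1 := cardB _ a i0 (tside b j0 A && ~~ tside a i0 A).
have c2 := cardB _ b j0 (tside a i0 A && ~~ tside b j0 A).
have key := arith2 c1 c2 cardAB.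
have {key} key : (#|Bside a i0 A (tside b j0 A && ~~ tside a i0 A)| +
   #|Bside b j0 A (tside a i0 A && ~~ tside b j0 A)| <= #|A| + 1)%N.
  apply: key; last by case: (tside a i0 A); case: (tside b j0 A).
  move=> ai0.
  have tm0 := tside_c hn a_inj hab he vA ai0.
  have bj0 : b j0 \in A by rewrite (proj2 (hba j0 i0) (conj erefl erefl)).
  have tn0 := tside_c hm b_inj hba he' vA bj0.
  by rewrite tm0 tn0.
rewrite cAm0 cAn0 in hle p1 q1; rewrite cA in key.
exact: arith hle le1 le2 key p1 q1.
Qed.
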